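(* Let $\theta>0$, $\lambda>0$, $\mu>0$ with $\lambda<\mu+1$. For $\alpha\ge 0$, $d\ge 0$ let $$\pi(\alpha,d)=(\theta+\mu)\alpha-\frac{\alpha^2}{2}-\frac{\alpha}{\alpha+d}\,\lambda\alpha\theta-d ,$$ let $\Pi(\alpha;\theta)=\max_{d\ge0}\pi(\alpha,d)$ for $\alpha>0$, and let $\alpha^*(\theta)$ be the maximizer of $\Pi(\cdot;\theta)$ over $\alpha>0$, namely $\alpha^*(\theta)=\mu+\theta(1-\lambda)$ if $\lambda\theta\le1$ and $\alpha^*(\theta)=\theta+\mu+1-2\sqrt{\lambda\theta}$ if $\lambda\theta>1$. Let $\alpha^0=\theta+\mu$ and $\Delta(\theta)=\alpha^0-\alpha^*(\theta)$. Then $$\Delta(\theta)=\begin{cases}\lambda\theta, & \lambda\theta\le 1,\\ 2\sqrt{\lambda\theta}-1, & \lambda\theta>1.\end{cases}$$ Moreover, $\Delta$ is continuously differentiable in $\theta$ at $\theta=1/\lambda$, is increasing in $\lambda$ and in $\theta$, and does not depend on $\mu$.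
   Context: $\alpha$ is AI deployment, $d$ security investment, $\theta$ AI capability, $\lambda$ breach-loss magnitude, $\mu$ organizational readiness. Breach probability is $\alpha/(\alpha+d)$ and breach damage $\lambda\alpha\theta$. $\alpha^0=\theta+\mu$ is the deployment that maximizes $(\theta+\mu)\alpha-\alpha^2/2$ (no-risk benchmark); $\Delta$ is called the security discount. *)

(* Defs.v *)
From Stdlib Require Import Reals Lra.
From Coquelicot Require Import Coquelicot.
Open Scope R_scope.

(* Recorded for context; alpha* below is the
   closed-form maximizer stated in the paper ("namely ..."). *)
Definition payoff (theta lam mu alpha d : R) : R :=
  (theta + mu) * alpha - alpha ^ 2 / 2
  - alpha / (alpha + d) * (lam * alpha * theta) - d.

Definition alpha_star (lam mu theta : R) : R :=
  if Rle_dec (lam * theta) 1 then mu + theta * (1 - lam)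
  else theta + mu + 1 - 2 * sqrt (lam * theta).

Definition alpha0 (mu theta : R) : R := theta + mu.

Definition security_discount (lam mu theta : R) : R := alpha0 mu theta - alpha_star lam mu theta.

(* Main.v *)
Require Import Defs.
From Stdlib Require Import Reals Lra.
From Coquelicot Require Import Coquelicot.
Open Scope R_scope.

Definition F (x : R) : R := if Rle_dec x 1 then x else 2 * sqrt x - 1.

Lemma SD_F lam mu t : security_discount lam mu t = F (lam * t).
Proof. unfold security_discount, alpha0, alpha_star, F.
  destruct (Rle_dec (lam * t) 1); ring. Qed.

Lemma F_incr x y : 0 < x -> x < y -> F x < F y.
Proof. intros Hx Hxy. unfold F.
  destruct (Rle_dec x 1); destruct (Rle_dec y 1); try lra.
  - assert (1 < sqrt y). { rewrite <- sqrt_1. apply sqrt_lt_1; lra. } lra.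
  - assert (sqrt x < sqrt y) by (apply sqrt_lt_1; lra). lra.
Qed.

Definition hd (lam u : R) := lam * / sqrt ((1 + lam * u + Rabs (lam * u - 1)) / 2).

Lemma loc_lt (a t : R) (P : R -> Prop) : a < t ->
  (forall y, a < y -> P y) -> locally t P.
Proof. intros H HP. exists (mkposreal (t - a) ltac:(lra)). intros y Hy.
  apply HP. cbn in Hy. unfold ball in Hy; cbn in Hy. unfold AbsRing_ball, abs, minus, plus, opp in Hy; cbn in Hy.
  apply Rabs_def2 in Hy. lra. Qed.

Lemma loc_gt (a t : R) (P : R -> Prop) : t < a ->
  (forall y, y < a -> P y) -> locally t P.
Proof. intros H HP. exists (mkposreal (a - t) ltac:(lra)). intros y Hy.
  apply HP. cbn in Hy. unfold ball in Hy; cbn in Hy. unfold AbsRing_ball, abs, minus, plus, opp in Hy; cbn in Hy.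
  apply Rabs_def2 in Hy. lra. Qed.

Lemma der_sqrt lam u : 0 < lam * u ->
  is_derive (fun t => 2 * sqrt (lam * t) - 1) u (lam * / sqrt (lam * u)).
Proof. intros H. auto_derive. lra.
  assert (0 < sqrt (lam * u)) by (apply sqrt_lt_R0; lra). field. lra. Qed.

Lemma der_g lam u : 0 < lam -> 0 < u -> is_derive (fun t => F (lam * t)) u (hd lam u).
Proof. intros Hl Hu. unfold hd.
  destruct (Rlt_le_dec (lam * u) 1) as [H1|H1].
  - replace ((1 + lam * u + Rabs (lam * u - 1)) / 2) with 1.
    2:{ rewrite Rabs_left; lra. }
    rewrite sqrt_1. replace (lam * / 1) with lam by field.
    apply is_derive_ext_loc with (fun t => lam * t).
    + apply (loc_gt (/ lam)). apply (Rmult_lt_reg_l lam); try lra.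
      rewrite Rinv_r; lra.
      intros y Hy. unfold F. destruct (Rle_dec (lam*y) 1); auto.
      exfalso. apply n. apply (Rmult_lt_compat_l lam) in Hy; auto. rewrite Rinv_r in Hy; lra.
    + auto_derive; auto. ring.
  - destruct H1 as [H1|H1].
    + replace ((1 + lam * u + Rabs (lam * u - 1)) / 2) with (lam * u).
      2:{ rewrite Rabs_right; lra. }
      apply is_derive_ext_loc with (fun t => 2 * sqrt (lam * t) - 1).
      * apply (loc_lt (/ lam)). apply (Rmult_lt_reg_l lam); try lra.
        rewrite Rinv_r; lra.
        intros y Hy. unfold F. destruct (Rle_dec (lam*y) 1); auto.
        exfalso. apply (Rmult_lt_compat_l lam) in Hy; auto. rewrite Rinv_r in Hy; lra.
      * apply der_sqrt. lra.
    + symmetry in H1. replace ((1 + lam * u + Rabs (lam * u - 1)) / 2) with 1.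
      2:{ rewrite H1, Rminus_diag, Rabs_R0; lra. }
      rewrite sqrt_1. replace (lam * / 1) with lam by field.
      apply is_derive_Reals. intros eps Heps.
      pose proof (der_sqrt lam u ltac:(lra)) as D.
      apply is_derive_Reals in D. rewrite H1, sqrt_1 in D.
      replace (lam * / 1) with lam in D by field.
      destruct (D eps Heps) as [del Hdel].
      exists del. intros h Hh0 Hh.
      specialize (Hdel h Hh0 Hh).
      assert (E0 : F (lam * u) = 1) by (unfold F; rewrite H1; destruct (Rle_dec 1 1); lra).
      rewrite E0.
      destruct (Rle_dec h 0).
      * unfold F. destruct (Rle_dec (lam * (u + h)) 1).
        -- replace ((lam * (u + h) - 1) / h - lam) with 0.
           rewrite Rabs_R0; lra. field_simplify; auto. rewrite <- H1. field. auto.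
        -- exfalso. apply n. assert (lam * h <= 0) by nra. nra.
      * unfold F. destruct (Rle_dec (lam * (u + h)) 1).
        -- exfalso. assert (lam * h > 0) by nra. nra.
        -- replace (2 * sqrt (lam * u) - 1) with 1 in Hdel by (rewrite H1, sqrt_1; ring).
           exact Hdel.
Qed.

Lemma hd_cont lam : 0 < lam -> continuous (hd lam) (/ lam).
Proof. intros Hl. unfold hd.
  assert (Hv : (1 + lam * / lam + Rabs (lam * / lam - 1)) / 2 = 1).
  { rewrite Rinv_r by lra. replace (1 - 1) with 0 by ring. rewrite Rabs_R0. field. }
  apply continuity_pt_filterlim.
  apply continuity_pt_mult. apply continuity_pt_const. intros a b; reflexivity.
  apply continuity_pt_inv.
  2:{ rewrite Hv, sqrt_1. lra. }
  apply (continuity_pt_comp (fun u => (1 + lam * u + Rabs (lam * u - 1)) / 2) sqrt).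
  2:{ rewrite Hv. apply sqrt_continuity_pt. lra. }
  apply (continuity_pt_mult (fun u => 1 + lam * u + Rabs (lam * u - 1)) (fun _ => / 2)). 2:{ apply continuity_pt_const. intros a b; reflexivity. }
  apply continuity_pt_plus. apply continuity_pt_plus.
  apply continuity_pt_const. intros a b; reflexivity.
  apply continuity_pt_mult. apply continuity_pt_const. intros a b; reflexivity.
  apply derivable_continuous_pt, derivable_pt_id.
  apply (continuity_pt_comp (fun u => lam * u - 1) Rabs).
  apply continuity_pt_minus.
  apply continuity_pt_mult. apply continuity_pt_const. intros a b; reflexivity.
  apply derivable_continuous_pt, derivable_pt_id.
  apply continuity_pt_const. intros a b; reflexivity.
  apply Rcontinuity_abs.
Qed.

Theorem proposition2 (theta lam mu : R)
  (Htheta : 0 < theta) (Hlam : 0 < lam) (Hmu : 0 < mu) (Hlm : lam < mu + 1) :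
  (* closed form of the security discount *)
  security_discount lam mu theta =
    (if Rle_dec (lam * theta) 1 then lam * theta
     else 2 * sqrt (lam * theta) - 1)
  (* continuously differentiable in theta at theta = 1/lam *)
  /\ (exists eps : R, 0 < eps /\
        forall t : R, Rabs (t - / lam) < eps -> ex_derive (security_discount lam mu) t)
  /\ continuous (Derive (security_discount lam mu)) (/ lam)
  (* increasing in lam (over the admissible range 0 < lam < mu + 1) *)
  /\ (forall l1 l2 : R, 0 < l1 -> l1 < l2 -> l2 < mu + 1 ->
        security_discount l1 mu theta < security_discount l2 mu theta)
  (* increasing in theta (over theta > 0) *)
  /\ (forall t1 t2 : R, 0 < t1 -> t1 < t2 ->
        security_discount lam mu t1 < security_discount lam mu t2)
  (* independent of mu (over admissible mu) *)
  /\ (forall mu' : R, 0 < mu' -> lam < mu' + 1 ->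
        security_discount lam mu' theta = security_discount lam mu theta).
Proof.
  assert (Hil : 0 < / lam) by (apply Rinv_0_lt_compat; lra).
  assert (Hext : forall t, security_discount lam mu t = F (lam * t)) by (intro; apply SD_F).
  split; [rewrite SD_F; reflexivity|].
  split.
  { exists (/ lam). split; auto. intros t Ht.
    apply Rabs_def2 in Ht.
    exists (hd lam t). apply is_derive_ext with (fun t => F (lam * t)).
    intro; symmetry; apply Hext. apply der_g; lra. }
  split.
  { apply continuous_ext_loc with (hd lam).
    - apply (loc_lt 0). auto. intros y Hy.
      symmetry. apply is_derive_unique. apply is_derive_ext with (fun t => F (lam * t)).
      intro; symmetry; apply Hext. apply der_g; lra.
    - apply hd_cont; auto. }
  split.
  { intros l1 l2 H1 H2 H3. rewrite !SD_F. apply F_incr; nra. }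
  split.
  { intros t1 t2 H1 H2. rewrite !SD_F. apply F_incr; nra. }
  intros. rewrite !SD_F. reflexivity.
Qed.
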